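(* Let $\varphi$ be an Orlicz $N$-function with Young–Fenchel transform $\psi$ and let $q_\varphi$ be the generalized inverse of the density of $\varphi$. Let $\{X_{k,n},k,n\ge1\}$ be a double array of independent $\varphi$-subgaussian random variables, and let $g$ be a positive non-decreasing function with $\tau_\varphi(X_{k,n})\le g(\ln(kn))$ for all $k,n\ge1$. Set $a_{m,j}=g(\ln(mj))\psi^{-1}(\ln(mj))$, $Y_{m,j}=\max_{1\le k\le m,1\le n\le j}X_{k,n}-a_{m,j}$ and $Y^-_{m,j}=\max(-Y_{m,j},0)$. Let $\kappa$ be a positive increasing differentiable function whose derivative $r=\kappa'$ is non-decreasing on $(0,\infty)$. Assume there is $C>0$ such that for all $k,n\ge1$ and all $x>0$ $$P\left(\frac{X_{k,n}}{g(\ln(kn))}<x\right)\le\exp\left(-Ce^{-\kappa(x)}\right),$$ and that $$\psi(x)-\kappa\left(\frac{x\,g(x)}{g(0)}\right)\ge C_0(x)$$ for some function $C_0$. Suppose there exist $A,\varepsilon_0>0$ such that for every $\varepsilon\in(0,\varepsilon_0]$ $$\int_A^{+\infty}\exp\left(-\frac{Cy}{2}\exp\left(-\kappa\left(\frac{g(\ln y)}{g(0)}\psi^{-1}(\ln y)-\frac{\varepsilon}{g(\ln y)}\right)\right)\right)dy<+\infty$$ and $$\int_A^{+\infty}\psi(y)q_\varphi(y)\exp\left(\psi(y)-\frac C2\exp\left(C_0(y)+\frac{\varepsilon\, r\left(\frac{y\,g(\psi(y))}{g(0)}-\frac{\varepsilon}{g(\psi(y))}\right)}{g(\psi(y))}\right)\right)dy<+\infty.$$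 Then $\lim_{m\vee j\to\infty}Y^-_{m,j}=0$ almost surely.
   Context: An Orlicz $N$-function is a continuous even convex function $\varphi:\mathbb R\to\mathbb R$ with $\varphi(0)=0$, increasing on $(0,\infty)$, with $\varphi(x)/x\to0$ as $x\to0$ and $\varphi(x)/x\to+\infty$ as $x\to+\infty$. It can be written $\varphi(x)=\int_0^{|x|}p_\varphi(t)\,dt$ with non-decreasing density $p_\varphi$; its generalized inverse is $q_\varphi(t)=\sup\{u\ge0:p_\varphi(u)\le t\}$. The Young–Fenchel transform is $\psi(x)=\sup_{y\in\mathbb R}(xy-\varphi(y))$, with $\psi(x)=\int_0^{|x|}q_\varphi(t)dt$; $\psi^{-1}$ is the inverse of $\psi$ on $[0,\infty)$. A random variable $X$ is $\varphi$-subgaussian if $EX=0$ and there is a finite $a>0$ with $E\exp(tX)\le\exp(\varphi(at))$ for all $t$; $\tau_\varphi(X)=\inf\{a>0:E\exp(tX)\le\exp(\varphi(at))\ \forall t\}$. $\lim_{m\vee j\to\infty}b_{m,j}=b$ means: for every $\varepsilon>0$ there is $N$ with $|b_{m,j}-b|<\varepsilon$ whenever $\max(m,j)\ge N$. *)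

(* Defs.v *)
From HB Require Import structures.
From mathcomp Require Import all_boot all_order all_algebra.
From mathcomp Require Import all_classical all_reals all_analysis.
Set Implicit Arguments. Unset Strict Implicit. Unset Printing Implicit Defensive.
Import Order.TTheory GRing.Theory Num.Theory.
Import numFieldNormedType.Exports.
Local Open Scope classical_set_scope.
Local Open Scope ring_scope.

Definition orlicz_N {R : realType} (phi : R -> R) : Prop :=
  continuous phi /\
  (forall x, phi (- x) = phi x) /\
  (forall x y t, 0 <= t -> t <= 1 ->
      phi (t * x + (1 - t) * y) <= t * phi x + (1 - t) * phi y) /\
  phi 0 = 0 /\
  (forall x y, 0 < x -> x < y -> phi x < phi y) /\
  (fun x => phi x / x) @ 0^' --> (0 : R) /\
  (fun x => phi x / x) @ +oo --> +oo.

Definition is_density {R : realType} (phi p : R -> R) : Prop :=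
  (forall u v, 0 <= u -> u <= v -> p u <= p v) /\
  (forall x, (phi x)%:E = (\int[lebesgue_measure]_(t in `[0%R, `|x|%R]) (p t)%:E)%E).

Definition gen_inv {R : realType} (p : R -> R) (t : R) : R :=
  sup [set u | 0 <= u /\ p u <= t].

Definition young_fenchel {R : realType} (phi : R -> R) (x : R) : R :=
  sup (range (fun y => x * y - phi y)).

(* inverse of the (continuous, strictly increasing, onto [0,oo)) function
   psi on [0,oo): for x >= 0 this is the unique u >= 0 with psi u = x *)
Definition inv_on_nonneg {R : realType} (psi : R -> R) (x : R) : R :=
  sup [set u | 0 <= u /\ psi u <= x].

Section Prob.
Context {R : realType} {d : measure_display} {T : measurableType d}.
Variable P : probability T R.

Definition mgf_bound (phi : R -> R) (X : T -> R) (a : R) : Prop :=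
  forall t, (\int[P]_w (expR (t * X w))%:E <= (expR (phi (a * t)))%:E)%E.

Definition phi_subgaussian (phi : R -> R) (X : T -> R) : Prop :=
  ('E_P[X] = 0)%E /\ exists a, 0 < a /\ mgf_bound phi X a.

Definition tau_phi (phi : R -> R) (X : T -> R) : R :=
  inf [set a | 0 < a /\ mgf_bound phi X a].

Definition mutually_independent (I : eqType) (S : set I) (Y : I -> T -> R) :
  Prop :=
  forall (s : seq I) (B : I -> set R),
    uniq s -> (forall i, i \in s -> S i) -> (forall i, measurable (B i)) ->
    P (\bigcap_(i in [set` s]) (Y i @^-1` B i)) =
    (\prod_(i <- s) P (Y i @^-1` B i))%E.
End Prob.

Definition lim_max_to {R : realType} (b : nat -> nat -> R) (l : R) : Prop :=
  forall e, 0 < e -> exists N : nat, forall m j, (0 < m)%N -> (0 < j)%N ->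
    (N <= maxn m j)%N -> `|b m j - l| < e.

Definition max_array {R : realType} (x : nat -> nat -> R) (m j : nat) : R :=
  \big[Num.max/x 1%N 1%N]_(1 <= k < m.+1) \big[Num.max/x 1%N 1%N]_(1 <= n < j.+1) x k n.

(* Main.v *)
Require Import Defs.
From HB Require Import structures.
From mathcomp Require Import all_boot all_order all_algebra.
From mathcomp Require Import all_classical all_reals all_analysis.
From mathcomp Require Import ring lra.
Import Order.TTheory GRing.Theory Num.Theory.
Import numFieldNormedType.Exports.
Local Open Scope classical_set_scope.
Local Open Scope ring_scope.
Set Implicit Arguments. Unset Strict Implicit. Unset Printing Implicit Defensive.
Section Aux.
Context {R : realType}.

Lemma bigmax_ge_seq (x0 : R) (F : nat -> R) (r : seq nat) i :
  i \in r -> F i <= \big[Num.max/x0]_(k <- r) F k.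
Proof.
elim: r => [//|a r IH]; rewrite inE big_cons => /orP[/eqP ->|/IH H].
  by rewrite le_max lexx.
by rewrite le_max H orbT.
Qed.

Lemma phi_ge0 (phi : R -> R) : orlicz_N phi -> forall y, 0 <= phi y.
Proof.
move=> [_ [ev [cv [p0 _]]]] y.
have := cv y (- y) (1/2) ltac:(lra) ltac:(lra).
have -> : 1 / 2 * y + (1 - 1 / 2) * - y = 0 by lra.
rewrite ev p0; lra.
Qed.

Lemma yf_ub (phi : R -> R) : orlicz_N phi -> forall x,
  has_ubound (range (fun y => x * y - phi y)).
Proof.
move=> H x; have phi0 := phi_ge0 H.
case: H => [_ [ev [_ [_ [_ [_ Hy]]]]]].
have /cvgryPge /(_ (`|x| + 1)) [M [Mr HM]] := Hy.
pose M' := Num.max M 1.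
exists (`|x| * M') => _ [y _ <-].
have M'1 : 1 <= M' by rewrite le_max lexx orbT.
have MM' : M <= M' by rewrite le_max lexx.
have key : forall z, M' < z -> `|x| * z - phi z <= 0.
  move=> z zM; have z0 : 0 < z by lra.
  have := HM z (le_lt_trans MM' zM); rewrite ler_pdivlMr // => hz.
  nra.
have [yM|yM] := ltP M' y.
  have : x * y <= `|x| * y by rewrite ler_pM2r ?ler_norm //; lra.
  have := key _ yM; have : 0 <= `|x| * M' by apply: mulr_ge0 => //; lra.
  lra.
have [yN|yN] := ltP y (- M').
  have := key (- y) ltac:(lra); rewrite ev.
  have : x * y <= `|x| * - y.
    apply: (le_trans (ler_norm _)); rewrite normrM (ler0_norm (_ : y <= 0)) //; lra.
  have : 0 <= `|x| * M' by apply: mulr_ge0 => //; lra.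
  lra.
have : x * y <= `|x| * M'.
  apply: (le_trans (ler_norm _)); rewrite normrM ler_wpM2l //.
  by rewrite ler_norml; lra.
have := phi0 y; lra.
Qed.

Lemma yf_ge (phi : R -> R) : orlicz_N phi -> forall x y,
  x * y - phi y <= young_fenchel phi x.
Proof.
move=> H x y; apply: ub_le_sup; first exact: yf_ub.
by exists y.
Qed.

Lemma yf0 (phi : R -> R) : orlicz_N phi -> young_fenchel phi 0 <= 0.
Proof.
move=> H; apply: ge_sup; first by exists (0 * 0 - phi 0), 0.
move=> _ [y _ <-]; have := phi_ge0 H y; lra.
Qed.

Definition Sv (phi : R -> R) v := [set u | 0 <= u /\ young_fenchel phi u <= v].

Lemma Sv_ub (phi : R -> R) : orlicz_N phi -> forall v,
  ubound (Sv phi v) (v + phi 1).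
Proof.
move=> H v u [u0 hu]; have := yf_ge H u 1; lra.
Qed.

Lemma Sv_sup (phi : R -> R) : orlicz_N phi -> forall v, 0 <= v ->
  has_sup (Sv phi v).
Proof.
move=> H v v0; split; last by exists (v + phi 1); exact: Sv_ub.
exists 0; split => //; have := yf0 H; lra.
Qed.

Lemma inv_ge0 (phi : R -> R) : orlicz_N phi -> forall v, 0 <= v ->
  0 <= inv_on_nonneg (young_fenchel phi) v.
Proof.
move=> H v v0; apply: (sup_upper_bound (Sv_sup H v0)); split => //.
have := yf0 H; lra.
Qed.

Lemma inv_mono (phi : R -> R) : orlicz_N phi -> forall v v', 0 <= v -> v <= v' ->
  inv_on_nonneg (young_fenchel phi) v <= inv_on_nonneg (young_fenchel phi) v'.
Proof.
move=> H v v' v0 vv; apply: sup_le.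
- move=> u [u0 hu]; apply/le_down; split => //; lra.
- exists 0; split => //; have := yf0 H; lra.
- apply: Sv_sup => //; lra.
Qed.

Lemma inv_big (phi : R -> R) : orlicz_N phi -> forall U v, 0 <= U ->
  young_fenchel phi U <= v -> 0 <= v ->
  U <= inv_on_nonneg (young_fenchel phi) v.
Proof.
move=> H U v U0 hU v0; apply: (sup_upper_bound (Sv_sup H v0)); by split.
Qed.

End Aux.
Section Aux2.
Context {R : realType}.
Definition cc (n : nat) : R := (n%:R * Num.sqrt n%:R)^-1.

Lemma cc_step (L : nat) : (1 <= L)%N ->
  cc L.+1 <= 2 * ((Num.sqrt L%:R)^-1 - (Num.sqrt L.+1%:R)^-1).
Proof.
move=> L1; rewrite /cc.
have Lp : 0 < L%:R :> R by rewrite ltr0n.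
set a := Num.sqrt L%:R; set b := Num.sqrt L.+1%:R.
have a0 : 0 < a by rewrite sqrtr_gt0.
have b0 : 0 < b by rewrite sqrtr_gt0 ltr0n.
have a2 : a ^+ 2 = L%:R by rewrite sqr_sqrtr // ltW.
have b2 : b ^+ 2 = L.+1%:R by rewrite sqr_sqrtr // ler0n.
have ab : a <= b by rewrite ler_sqrt // ler_nat.
have -> : L.+1%:R = b ^+ 2 by [].
have t_eq : (a^-1 - b^-1) * (a * b * (a + b)) = 1.
  have -> : (a^-1 - b^-1) * (a * b * (a + b)) = b ^+ 2 - a ^+ 2.
    by field; apply/andP; split; rewrite gt_eqF.
  by rewrite a2 b2 -natrB // subSnn.
have tpos : 0 < a^-1 - b^-1.
  by rewrite subr_gt0 ltf_pV2 // ltr_sqrt ?ltr0n // ltr_nat.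
have key : a * b * (a + b) <= 2 * (b ^+ 2 * b) by nra.
have bb : 0 < b ^+ 2 * b by apply: mulr_gt0 => //; apply: exprn_gt0.
rewrite -(div1r (b ^+ 2 * b)) ler_pdivrMr //.
set t := a^-1 - b^-1 in t_eq tpos *.
nra.
Qed.

Lemma cc_tele (M L : nat) : (1 <= M)%N -> (M <= L)%N ->
  \sum_(M <= n < L.+1) cc n + 2 * (Num.sqrt L%:R)^-1 <=
  cc M + 2 * (Num.sqrt M%:R)^-1.
Proof.
move=> M1; elim: L => [|L IH]; first by rewrite leqn0 => /eqP ->; rewrite big_nat1.
rewrite leq_eqVlt => /orP[/eqP <-|ML]; first by rewrite big_nat1.
have := IH ML; rewrite (big_nat_recr L.+1) /=; last by rewrite ltnW.
have := cc_step (leq_trans M1 ML).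
lra.
Qed.

Lemma cc_ge0 n : 0 <= cc n.
Proof. by rewrite /cc invr_ge0; apply: mulr_ge0; rewrite // sqrtr_ge0. Qed.

Lemma cc_sum (M L : nat) : (1 <= M)%N ->
  \sum_(M <= n < L) cc n <= 3 * (Num.sqrt M%:R)^-1.
Proof.
move=> M1.
have sM : 0 < Num.sqrt M%:R :> R by rewrite sqrtr_gt0 ltr0n.
have ccM : cc M <= (Num.sqrt M%:R)^-1.
  rewrite /cc invfM ler_piMl ?invr_ge0 ?sqrtr_ge0 //.
  by rewrite invf_le1 ?ltr0n // ler1n.
case: (leqP L M) => LM.
  rewrite big_geq //; apply: mulr_ge0 => //; rewrite invr_ge0 ltW //.
case: L LM => [//|L] LM.
have := cc_tele M1 LM.
have : 0 <= 2 * (Num.sqrt L%:R)^-1 :> R by apply: mulr_ge0; rewrite // invr_ge0 sqrtr_ge0.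
lra.
Qed.

Lemma series_le (u : nat -> \bar R) (B : \bar R) :
  (forall n, (0 <= u n)%E) ->
  (forall k, (\sum_(0 <= i < k) u i <= B)%E) ->
  (\sum_(0 <= i <oo) u i <= B)%E.
Proof.
move=> u0 hk; apply: lime_le; first by apply: is_cvg_nneseries => n _ _; exact: u0.
by near=> n; exact: hk.
Unshelve. all: by end_near.
Qed.
End Aux2.
Section Aux3.
Context {R : realType}.
Local Notation mu := (@lebesgue_measure R).

Lemma int_lower (A : R) (f : R -> R) :
  (forall y, A <= y -> 0 <= f y) ->
  mu.-integrable `[A, +oo[ (fun y => (f y)%:E) ->
  exists I : R, 0 <= I /\ forall lo hi c, A <= lo -> lo <= hi -> 0 <= c ->
    (forall y, lo <= y -> y <= hi -> c <= f y) -> c * (hi - lo) <= I.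
Proof.
move=> f0 /integrableP [mf fin].
have mAi : measurable (`[A, +oo[ : set R) by exact: measurable_itv.
set J := (\int[mu]_(x in `[A, +oo[) (f x)%:E)%E.
have J0 : (0 <= J)%E.
  by apply: integral_ge0 => y; rewrite /= in_itv /= andbT => Ay; rewrite lee_fin f0.
have JE : J = (\int[mu]_(x in `[A, +oo[) (`|f x|)%:E)%E.
  apply: eq_integral => y; rewrite inE /= in_itv /= andbT => Ay.
  by rewrite ger0_norm // f0.
have Jfin : J \is a fin_num by rewrite ge0_fin_numE // JE.
exists (fine J); split; first by rewrite fine_ge0.
move=> lo hi c Alo lohi c0 hc.
have sub : (`[lo, hi] : set R) `<=` `[A, +oo[.
  move=> y; rewrite /= !in_itv /= andbT => /andP[ly _]; lra.
have mlh : measurable (`[lo, hi] : set R) by exact: measurable_itv.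
rewrite -lee_fin fineK //.
apply: (@le_trans _ _ (\int[mu]_(x in `[lo, hi]) (f x)%:E)%E); last first.
  apply: ge0_subset_integral => //.
  by move=> y; rewrite /= in_itv /= andbT => Ay; rewrite lee_fin f0.
apply: (@le_trans _ _ (\int[mu]_(x in `[lo, hi]) (cst c%:E) x)%E).
  rewrite integral_cst //; have L := @lebesgue_measure_itv R `[lo, hi].
  rewrite [X in (_ <= _ * X)%E](_ : _ = (hi - lo)%:E); first by rewrite -EFinM.
  apply: (eq_trans L) => /=; case: ifPn => lh; first by rewrite -EFinB.
  have -> : hi = lo by move: lh; rewrite lte_fin; lra.
  by rewrite subrr.
apply: (@ge0_le_integral _ _ _ mu _ mlh (cst c%:E) (fun x => (f x)%:E)).
- by move=> y _; rewrite lee_fin.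
- exact: measurable_cst.
- exact: measurable_funS mf.
- by move=> y; rewrite /= in_itv /= => /andP[ly yh]; rewrite lee_fin hc.
Qed.
End Aux3.
Section Aux4.
Context {R : realType}.

Definition rect (m j : nat) : seq (nat * nat) :=
  [seq (k, n) | k <- iota 1 m, n <- iota 1 j].

Lemma rect_uniq m j : uniq (rect m j).
Proof.
apply: allpairs_uniq; rewrite ?iota_uniq //.
by move=> [a b] [a' b'] _ _ /=.
Qed.

Lemma mem_rect m j i : i \in rect m j -> [/\ (0 < i.1)%N, (i.1 <= m)%N, (0 < i.2)%N & (i.2 <= j)%N].
Proof.
case/allpairsP => -[k n] /= [] ; rewrite !mem_iota => /andP[k1 km] /andP[n1 nj] ->.
by split => //=; rewrite -ltnS -[X in (_ < X)%N]add1n.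
Qed.

Lemma rect_mem m j k n : (0 < k)%N -> (k <= m)%N -> (0 < n)%N -> (n <= j)%N ->
  (k, n) \in rect m j.
Proof.
move=> k0 km n0 nj; apply/allpairsP; exists (k, n) => /=; split => //;
  rewrite mem_iota ?k0 ?n0 /= add1n ltnS //.
Qed.

Lemma prod_le (I : eqType) (s : seq I) (F : I -> \bar R) (e : R) :
  0 <= e -> (forall i, i \in s -> (0 <= F i)%E /\ (F i <= e%:E)%E) ->
  (\prod_(i <- s) F i <= (e ^+ size s)%:E)%E.
Proof.
move=> e0; elim: s => [_|a s IH H]; first by rewrite big_nil expr0.
rewrite big_cons /= exprS EFinM.
have [Fa0 Fae] := H a (mem_head _ _).
apply: lee_pmul => //.
  rewrite big_seq_cond; apply: prode_ge0 => i /andP[Hi _]; by apply: (H i _).1; rewrite inE Hi orbT.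
by apply: IH => i Hi; apply: H; rewrite inE Hi orbT.
Qed.

Lemma stepA d (Omega : measurableType d) (P : probability Omega R)
  (X : nat -> nat -> {RV P >-> R}) (m j : nat) (c e0 : R) :
  mutually_independent P [set kn : nat * nat | (0 < kn.1)%N /\ (0 < kn.2)%N]
    (fun kn => X kn.1 kn.2 : Omega -> R) ->
  0 <= e0 ->
  (forall k n, (0 < k)%N -> (k <= m)%N -> (0 < n)%N -> (n <= j)%N ->
     (P (X k n @^-1` `]-oo, c[) <= e0%:E)%E) ->
  (P (\bigcap_(i in [set` rect m j]) (X i.1 i.2 @^-1` `]-oo, c[)) <= (e0 ^+ (m * j))%:E)%E.
Proof.
move=> Hind e0p Hb.
have := Hind (rect m j) (fun _ => `]-oo, c[%classic) (rect_uniq m j).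
move=> /(_ _ _) E; rewrite E; last 2 first.
- by move=> i /mem_rect [].
- by move=> _; exact: measurable_itv.
have -> : (m * j)%N = size (rect m j) by rewrite size_allpairs !size_iota.
apply: prod_le => // i /mem_rect [k0 km n0 nj]; split; last exact: Hb.
exact: measure_ge0.
Qed.
End Aux4.
Section Sums.
Context {R : realType}.
Definition ind (M j : nat) : R := if (M <= j)%N then 1 else 0.

Lemma ind_ge0 M j : 0 <= ind M j.
Proof. by rewrite /ind; case: ifP. Qed.

Lemma S1 k : \sum_(0 <= j < k) cc j <= 3 :> R.
Proof.
case: k => [|k]; first by rewrite big_geq.
rewrite big_ltn // {1}/cc mul0r invr0 add0r.
by have := @cc_sum R 1 k.+1 (leqnn 1); rewrite sqrtr1 invr1 mulr1.
Qed.

Lemma S2 M k : (1 <= M)%N -> \sum_(0 <= j < k) ind M j * cc j <= 3 * (Num.sqrt M%:R)^-1 :> R.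
Proof.
move=> M1.
have h0 : 0 <= 3 * (Num.sqrt M%:R)^-1 :> R.
  by apply: mulr_ge0 => //; rewrite invr_ge0 sqrtr_ge0.
case: (leqP M k) => Mk.
  rewrite (@big_cat_nat _ _ _ M) //= big_nat_cond big1 ?add0r; last first.
    by move=> j /andP[/andP[_ jM] _]; rewrite /ind leqNgt jM mul0r.
  rewrite big_nat_cond.
  under eq_bigr => j /andP[/andP[Mj _] _] do rewrite /ind Mj mul1r.
  by rewrite -big_nat_cond; exact: cc_sum.
rewrite big_nat_cond big1 // => j /andP[/andP[_ jk] _].
by rewrite /ind leqNgt (leq_trans jk (ltnW Mk)) mul0r.
Qed.
End Sums.

Section Main.
Context {R : realType} {d : measure_display} {Omega : measurableType d}
  (P : probability Omega R) (phi : R -> R) (X : nat -> nat -> {RV P >-> R})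
  (g kappa : R -> R) (C : R).
Hypothesis Hphi : orlicz_N phi.
Hypothesis Hind : mutually_independent P [set kn : nat * nat | (0 < kn.1)%N /\ (0 < kn.2)%N]
    (fun kn => X kn.1 kn.2 : Omega -> R).
Hypothesis gpos : forall x, 0 <= x -> 0 < g x.
Hypothesis gmono : forall x y, 0 <= x -> x <= y -> g x <= g y.
Hypothesis kmono : forall x y, 0 < x -> x < y -> kappa x < kappa y.
Hypothesis Cpos : 0 < C.
Hypothesis Htail : forall k n, (0 < k)%N -> (0 < n)%N -> forall x, 0 < x ->
     (P [set w | (X k n w / g (ln (k * n)%:R) < x)%R]
        <= (expR (- (C * expR (- kappa x))))%:E)%E.

Local Notation Inv := (inv_on_nonneg (young_fenchel phi)).
Definition aa (N : nat) : R := g (ln N%:R) * Inv (ln N%:R).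
Definition bb (eps y : R) : R := g (ln y) / g 0 * Inv (ln y) - eps / g (ln y).
Definition ss eps y := expR (- kappa (bb eps y)).
Definition DD eps m j := \bigcap_(i in [set` rect m j])
  (X i.1 i.2 @^-1` `]-oo, aa (m * j) - eps[).

Lemma kmono_le x y : 0 < x -> x <= y -> kappa x <= kappa y.
Proof.
move=> x0; rewrite le_eqVlt => /orP[/eqP ->//|xy]; exact/ltW/kmono.
Qed.

Lemma g0pos : 0 < g 0. Proof. exact: gpos. Qed.

Lemma N0_ex (eps A : R) : 0 < eps -> exists N0 : nat, (1 <= N0)%N /\
  forall N, (N0 <= N)%N -> A <= N%:R /\ eps / g 0 + 1 <= Inv (ln N%:R).
Proof.
move=> e0; set U := eps / g 0 + 1.
have e1 : 0 <= eps / g 0 by apply: divr_ge0; [exact: ltW | exact: ltW g0pos].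
have U0 : 0 <= U by rewrite /U; lra.
set V := Num.max (young_fenchel phi U) 0.
set Z := Num.max (expR V) A.
have Z0 : 0 <= Z by rewrite le_max (ltW (expR_gt0 _)).
exists (Num.truncn Z).+1; split => // N HN.
have ZN : Z < N%:R.
  have := truncn_itv Z0 => /andP[_ h]; apply: (lt_le_trans h).
  by rewrite ler_nat.
have eN : expR V < N%:R by apply: le_lt_trans ZN; rewrite le_max lexx.
split; first by apply: ltW; apply: le_lt_trans ZN; rewrite le_max lexx orbT.
have lnV : V <= ln N%:R.
  rewrite -(expRK V) ler_ln ?ltW // posrE ?expR_gt0 //.
  exact: lt_trans (expR_gt0 V) eN.
apply: inv_big => //.
- by apply: le_trans lnV; rewrite le_max lexx.
- by apply: le_trans lnV; rewrite le_max lexx orbT.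
Qed.

Lemma bb_facts (eps y0 y : R) : 0 < eps -> 1 <= y0 -> y0 <= y ->
  eps / g 0 + 1 <= Inv (ln y0) -> 0 < bb eps y0 /\ bb eps y0 <= bb eps y.
Proof.
move=> e0 y01 yy hI.
have l0 : 0 <= ln y0 by exact: ln_ge0.
have ll : ln y0 <= ln y by rewrite ler_ln // posrE; lra.
have g0 := g0pos.
have gy0 : g 0 <= g (ln y0) by exact: gmono.
have gyy : g (ln y0) <= g (ln y) by exact: gmono.
have I0 : 0 <= Inv (ln y0) by exact: inv_ge0.
have II : Inv (ln y0) <= Inv (ln y) by exact: inv_mono.
have e1 : 0 <= eps / g 0 by apply: divr_ge0; [exact: ltW | exact: ltW g0pos].
rewrite /bb; split.
  have h1 : 1 <= g (ln y0) / g 0 by rewrite ler_pdivlMr // mul1r.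
  have h2 : eps / g (ln y0) <= eps / g 0.
    by rewrite ler_pdivrMr ?(lt_le_trans g0) // mulrAC ler_pdivlMr // ler_wpM2l // ltW.
  nra.
have h1 : g (ln y0) / g 0 * Inv (ln y0) <= g (ln y) / g 0 * Inv (ln y).
  apply: ler_pM => //; first by rewrite divr_ge0 // ltW // (lt_le_trans g0).
  by rewrite ler_pM2r // invr_gt0.
have h2 : eps / g (ln y) <= eps / g (ln y0).
  rewrite ler_pdivrMr ?(lt_le_trans g0) ?(le_trans gy0) //.
  by rewrite mulrAC ler_pdivlMr ?(lt_le_trans g0) // ler_wpM2l // ltW.
lra.
Qed.

Lemma term_bound (eps : R) m j k n : 0 < eps -> (0 < k)%N -> (k <= m)%N ->
  (0 < n)%N -> (n <= j)%N -> eps / g 0 + 1 <= Inv (ln (m * j)%:R) ->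
  (P (X k n @^-1` `]-oo, (aa (m * j) - eps)%R[) <=
     (expR (- (C * ss eps (m * j)%:R)))%:E)%E.
Proof.
move=> e0 k0 km n0 nj hI.
have mj1 : 1 <= (m * j)%:R :> R.
  by rewrite ler1n muln_gt0 (leq_trans k0 km) (leq_trans n0 nj).
have [bpos _] := bb_facts e0 mj1 (lexx _) hI.
have g0 := g0pos.
have kn1 : 1 <= (k * n)%:R :> R by rewrite ler1n muln_gt0 k0 n0.
have gk0 : g 0 <= g (ln (k * n)%:R) by apply: gmono => //; exact: ln_ge0.
have gN0 : g 0 <= g (ln (m * j)%:R) by apply: gmono => //; exact: ln_ge0.
set gk := g (ln (k * n)%:R) in gk0 *.
set G := g (ln (m * j)%:R) in gN0 *.
set I := Inv (ln (m * j)%:R) in hI *.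
have gkp : 0 < gk by exact: lt_le_trans gk0.
have Gp : 0 < G by exact: lt_le_trans gN0.
have e1 : 0 <= eps / g 0 by apply: divr_ge0; [exact: ltW | exact: ltW g0pos].
have set2E : [set w | X k n w / gk < bb eps (m * j)%:R] =
    X k n @^-1` `]-oo, bb eps (m * j)%:R * gk[.
  by apply/seteqP; split => w /=; rewrite in_itv /= ltr_pdivrMr.
have sub : X k n @^-1` `]-oo, aa (m * j) - eps[ `<=`
    [set w | X k n w / gk < bb eps (m * j)%:R].
  move=> w; rewrite /= in_itv /= => hx.
  rewrite /bb -/G -/I.
  have c0 : 0 <= aa (m * j) - eps.
    rewrite /aa -/G -/I.
    have : eps <= g 0 * I.
      by rewrite -ler_pdivrMl //; apply: le_trans hI; rewrite mulrC; lra.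
    have : g 0 * I <= G * I by rewrite ler_pM2r //; apply: lt_le_trans hI; lra.
    lra.
  have h1 : X k n w / gk < (aa (m * j) - eps) / gk by rewrite ltr_pM2r ?invr_gt0.
  have h2 : (aa (m * j) - eps) / gk <= (aa (m * j) - eps) / g 0.
    by rewrite ler_wpM2l // lef_pV2.
  have h3 : (aa (m * j) - eps) / g 0 = G / g 0 * I - eps / g 0.
    by rewrite /aa -/G -/I mulrBl mulrAC.
  have h4 : eps / G <= eps / g 0 by rewrite ler_wpM2l ?lef_pV2 // ltW.
  lra.
apply: le_trans (Htail k0 n0 bpos).
apply: le_measure => //; rewrite inE.
- exact: measurable_funPTI (measurable_itv _).
- rewrite set2E; exact: measurable_funPTI (measurable_itv _).
Qed.

Lemma D_bound (eps : R) m j : 0 < eps -> (0 < m)%N -> (0 < j)%N ->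
  eps / g 0 + 1 <= Inv (ln (m * j)%:R) ->
  (P (DD eps m j) <= (expR (- (C * ss eps (m * j)%:R)) ^+ (m * j))%:E)%E.
Proof.
move=> e0 m0 j0 hI; apply: stepA.
- exact: Hind.
- exact: ltW (expR_gt0 _).
- by move=> k n k0 km n0 nj; apply: term_bound.
Qed.

Lemma DD_meas eps m j : measurable (DD eps m j).
Proof.
apply: fin_bigcap_measurable; first exact: finite_seq.
by move=> i _; exact: measurable_funPTI (measurable_itv _).
Qed.

Lemma pair_bound (eps A : R) : 0 < eps ->
  lebesgue_measure.-integrable `[A, +oo[
    (fun y => (expR (- (C * y / 2 *
       expR (- kappa (g (ln y) / g 0 * Inv (ln y) - eps / g (ln y))))))%:E) ->
  exists K : R, exists N0 : nat, 0 <= K /\ (1 <= N0)%N /\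
    forall m j, (0 < m)%N -> (0 < j)%N -> (N0 <= m * j)%N ->
      (P (DD eps m j) <= (K * (cc m * cc j))%:E)%E.
Proof.
move=> e0 Hint.
have [I [I0 HI]] := @int_lower R A (fun y => expR (- (C * y / 2 *
       expR (- kappa (g (ln y) / g 0 * Inv (ln y) - eps / g (ln y)))))) 
   (fun y _ => ltW (expR_gt0 _)) Hint.
have [N0 [N01 HN0]] := N0_ex A e0.
have sI : 0 <= Num.sqrt (3 * I) by exact: sqrtr_ge0.
exists (3 * I * Num.sqrt (3 * I)), N0; split.
  by apply: mulr_ge0 => //; apply: mulr_ge0.
split => // m j m0 j0 hN.
have [AN hI] := HN0 _ hN.
set N := (m * j)%N in hN AN hI *.
have N1 : 1 <= N%:R :> R by rewrite ler1n muln_gt0 m0 j0.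
have [bpos bmono] := bb_facts e0 N1 (lexx _) hI.
have ss0 : forall y, 0 <= ss eps y by move=> y; exact: ltW (expR_gt0 _).
set u := N%:R * ss eps N%:R.
have u0 : 0 <= u by apply: mulr_ge0; [lra | exact: ss0].
set v := expR (- (2 / 3 * C * u)).
have v0 : 0 < v by exact: expR_gt0.
have hv : v * (4 / 3 * N%:R - N%:R) <= I.
  apply: HI => //; [lra | exact: ltW |].
  move=> y Ny yN; rewrite /v ler_expR.
  have sy : ss eps y <= ss eps N%:R.
    rewrite /ss ler_expR lerN2; apply: kmono_le => //.
    exact: (bb_facts e0 N1 Ny hI).2.
  have := ss0 y; rewrite /ss /bb in sy * => sy0.
  rewrite /u /ss /bb.
  set t := expR (- kappa (g (ln y) / g 0 * Inv (ln y) - eps / g (ln y))) in sy sy0 *.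
  set t0 := expR _ in sy *.
  have : C * y * t <= C * (4 / 3 * N%:R) * t0.
    apply: ler_pM; [apply: mulr_ge0; [exact: ltW | exact: le_trans (le_trans ler01 N1) Ny] | exact: sy0 | | exact: sy].
    by rewrite ler_pM2l //; lra.
  lra.
have hv' : v <= 3 * I / N%:R.
  rewrite ler_pdivlMr; last lra.
  lra.
apply: le_trans (D_bound e0 m0 j0 hI) _; rewrite lee_fin.
set w := expR (- (1 / 3 * C * u)).
have w0 : 0 < w by exact: expR_gt0.
have ww : w ^+ 2 = v.
  by rewrite -expRM_natl /v; congr expR; lra.
have -> : expR (- (C * ss eps N%:R)) ^+ N = v * w.
  rewrite -expRM_natl /v /w -expRD /u; congr expR; lra.
have hw : w <= Num.sqrt (3 * I / N%:R).
  by rewrite -(ger0_norm (ltW w0)) -sqrtr_sqr ler_wsqrtr // ww.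
have Np : 0 < N%:R :> R by lra.
have -> : cc m * cc j = (N%:R * Num.sqrt N%:R)^-1 :> R.
  by rewrite /cc /N natrM sqrtrM ?ler0n // -invfM mulrACA.
have E2 : Num.sqrt (3 * I / N%:R) = Num.sqrt (3 * I) * (Num.sqrt N%:R)^-1.
  by rewrite sqrtrM ?sqrtrV //; lra.
rewrite E2 in hw.
have -> : 3 * I * Num.sqrt (3 * I) * (N%:R * Num.sqrt N%:R)^-1 =
   (3 * I / N%:R) * (Num.sqrt (3 * I) * (Num.sqrt N%:R)^-1).
  by rewrite invfM; ring.
apply: ler_pM => //; exact: ltW.
Qed.
Lemma bad_eps (eps A : R) : 0 < eps ->
  lebesgue_measure.-integrable `[A, +oo[
    (fun y => (expR (- (C * y / 2 *
       expR (- kappa (g (ln y) / g 0 * Inv (ln y) - eps / g (ln y))))))%:E) ->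
  exists Bad : set Omega, measurable Bad /\ P Bad = 0 /\
    forall w, ~ Bad w -> exists M : nat, forall m j, (0 < m)%N -> (0 < j)%N ->
      (M <= maxn m j)%N -> ~ DD eps m j w.
Proof.
move=> e0 Hint.
have [K [N0 [K0 [N01 HK]]]] := pair_bound e0 Hint.
pose Dm (M m j : nat) : set Omega :=
  if [&& (0 < m)%N, (0 < j)%N & (M <= maxn m j)%N] then DD eps m j else set0.
pose G M := \bigcup_m \bigcup_j Dm M m j.
have mDm : forall M m j, measurable (Dm M m j).
  by move=> M m j; rewrite /Dm; case: ifP => _; [exact: DD_meas|exact: measurable0].
have mG1 : forall M m, measurable (\bigcup_j Dm M m j).
  by move=> M m; apply: bigcupT_measurable => j; exact: mDm.
have mG : forall M, measurable (G M).
  by move=> M; apply: bigcupT_measurable => m; exact: mG1.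
have PDm : forall M m j, (N0 <= M)%N ->
    (P (Dm M m j) <= (K * cc m * (ind M m + ind M j) * cc j)%:E)%E.
  move=> M m j N0M; rewrite /Dm.
  have T0 : 0 <= K * cc m * (ind M m + ind M j) * cc j.
    apply: mulr_ge0; last exact: cc_ge0.
    apply: mulr_ge0; last by apply: addr_ge0; exact: ind_ge0.
    by apply: mulr_ge0 => //; exact: cc_ge0.
  case: ifP => [/and3P[m0 j0 Mmx]|_]; last by rewrite measure0 lee_fin.
  have hmj : (N0 <= m * j)%N.
    apply: (leq_trans N0M); apply: (leq_trans Mmx).
    by rewrite geq_max; apply/andP; split; [exact: leq_pmulr | exact: leq_pmull].
  apply: (le_trans (HK m j m0 j0 hmj)); rewrite lee_fin.
  have i1 : 1 <= ind M m + ind M j :> R.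
    rewrite /ind; case: (leqP M m) => h1; case: (leqP M j) => h2 /=; try lra.
    by move: Mmx; rewrite leq_max (leqNgt M m) (leqNgt M j) h1 h2.
  have -> : K * cc m * (ind M m + ind M j) * cc j =
    (K * (cc m * cc j)) * (ind M m + ind M j) by ring.
  apply: ler_peMr => //; apply: mulr_ge0 => //; apply: mulr_ge0; exact: cc_ge0.
have PG : forall M, (N0 <= M)%N -> (1 <= M)%N ->
    (P (G M) <= (18 * K * (Num.sqrt M%:R)^-1)%:E)%E.
  move=> M N0M M1; set sM := (Num.sqrt M%:R)^-1.
  have sM0 : 0 <= sM by rewrite invr_ge0 sqrtr_ge0.
  apply: le_trans.
    by apply: (measure_sigma_subadditive P (mG1 M) (mG M) (fun x h => h)).
  apply: le_trans.
    apply: (@lee_nneseries _ _ (fun m => (K * cc m * (ind M m * 3 + 3 * sM))%:E)).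
      by move=> m _ _; exact: measure_ge0.
    move=> m _.
    apply: le_trans.
      by apply: (measure_sigma_subadditive P (mDm M m) (mG1 M m) (fun x h => h)).
    apply: le_trans.
      apply: (@lee_nneseries _ _ (fun j => (K * cc m * (ind M m + ind M j) * cc j)%:E)).
        by move=> j _ _; exact: measure_ge0.
      by move=> j _; exact: PDm.
    apply: series_le.
      move=> j; rewrite lee_fin.
      apply: mulr_ge0; last exact: cc_ge0.
      apply: mulr_ge0; last by apply: addr_ge0; exact: ind_ge0.
      by apply: mulr_ge0 => //; exact: cc_ge0.
    move=> k; rewrite sumEFin lee_fin.
    have E : forall j, K * cc m * (ind M m + ind M j) * cc j =
      (K * cc m * ind M m) * cc j + (K * cc m) * (ind M j * cc j) by move=> j; ring.
    rewrite (eq_bigr _ (fun j _ => E j)) big_split /= -!mulr_sumr.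
    have -> : K * cc m * (ind M m * 3 + 3 * sM) =
      (K * cc m * ind M m) * 3 + (K * cc m) * (3 * sM) by ring.
    have a0 : 0 <= K * cc m by apply: mulr_ge0 => //; exact: cc_ge0.
    apply: lerD; apply: ler_wpM2l.
    - by apply: mulr_ge0 => //; exact: ind_ge0.
    - exact: S1.
    - exact: a0.
    - exact: S2.
  apply: series_le.
    move=> m; rewrite lee_fin; apply: mulr_ge0.
      by apply: mulr_ge0 => //; exact: cc_ge0.
    by apply: addr_ge0; [apply: mulr_ge0 => //; exact: ind_ge0 | apply: mulr_ge0].
  move=> k; rewrite sumEFin lee_fin.
  have E : forall m, K * cc m * (ind M m * 3 + 3 * sM) =
    (3 * K) * (ind M m * cc m) + (3 * K * sM) * cc m by move=> m; ring.
  rewrite (eq_bigr _ (fun m _ => E m)) big_split /= -!mulr_sumr.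
  have -> : 18 * K * sM = (3 * K) * (3 * sM) + (3 * K * sM) * 3 by ring.
  apply: lerD; apply: ler_wpM2l.
  - by apply: mulr_ge0.
  - exact: S2.
  - by apply: mulr_ge0 => //; apply: mulr_ge0.
  - exact: S1.
pose Bad := \bigcap_M G M.
have mBad : measurable Bad by apply: bigcapT_measurable => M; exact: mG.
exists Bad; split => //; split.
  apply/eqP; rewrite eq_le measure_ge0 andbT; apply/lee_addgt0Pr => de de0.
  rewrite add0e.
  set q := 18 * K / de.
  have q0 : 0 <= q by apply: divr_ge0; [apply: mulr_ge0 | exact: ltW].
  pose M := maxn N0 (Num.truncn (q ^+ 2)).+1.
  have N0M : (N0 <= M)%N by rewrite leq_maxl.
  have M1 : (1 <= M)%N by rewrite leq_max ltnS leq0n orbT.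
  have qM : q ^+ 2 < M%:R.
    have := truncn_itv (sqr_ge0 q) => /andP[_ h]; apply: (lt_le_trans h).
    by rewrite ler_nat leq_maxr.
  have Mp : 0 < M%:R :> R by rewrite ltr0n.
  have qs : q < Num.sqrt M%:R.
    by rewrite -(ger0_norm q0) -sqrtr_sqr ltr_sqrt.
  have sMp : 0 < Num.sqrt M%:R :> R by rewrite sqrtr_gt0.
  apply: le_trans; last apply: (le_trans (PG M N0M M1)).
    apply: le_measure; [rewrite inE; exact: mBad | rewrite inE; exact: mG |].
    by move=> w HB; exact: (HB M Logic.I).
  rewrite lee_fin ler_pdivrMr //.
  by move: qs; rewrite /q ltr_pdivrMr //; lra.
move=> w nB.
have [M HM] : exists M, ~ G M w.
  apply/existsNP => H; apply: nB => M _; exact: H M.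
exists M => m j m0 j0 Mmx Dw; apply: HM; exists m => //; exists j => //.
by rewrite /Dm m0 j0 Mmx.
Qed.
End Main.
Unset Implicit Arguments.
Theorem theorem2 (R : realType) (d : measure_display) (Omega : measurableType d)
  (P : probability Omega R) (phi p : R -> R)
  (X : nat -> nat -> {RV P >-> R}) (g kappa C0 : R -> R) (C : R) :
  orlicz_N phi ->
  is_density phi p ->
  mutually_independent P [set kn : nat * nat | (0 < kn.1)%N /\ (0 < kn.2)%N]
    (fun kn => X kn.1 kn.2 : Omega -> R) ->
  (forall k n, (0 < k)%N -> (0 < n)%N -> phi_subgaussian P phi (X k n)) ->
  (forall x, 0 <= x -> 0 < g x) ->
  (forall x y, 0 <= x -> x <= y -> g x <= g y) ->
  (forall k n, (0 < k)%N -> (0 < n)%N ->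
     tau_phi P phi (X k n) <= g (ln (k * n)%:R)) ->
  (forall x, 0 < x -> 0 < kappa x) ->
  (forall x y, 0 < x -> x < y -> kappa x < kappa y) ->
  (forall x, 0 < x -> derivable kappa x 1) ->
  (forall x y, 0 < x -> x <= y -> derive1 kappa x <= derive1 kappa y) ->
  0 < C ->
  (forall k n, (0 < k)%N -> (0 < n)%N -> forall x, 0 < x ->
     (P [set w | (X k n w / g (ln (k * n)%:R) < x)%R]
        <= (expR (- (C * expR (- kappa x))))%:E)%E) ->
  (forall x, 0 < x ->
     C0 x <= young_fenchel phi x - kappa (x * g x / g 0)) ->
  (exists A eps0, 0 < A /\ 0 < eps0 /\
     forall eps, 0 < eps -> eps <= eps0 ->
       lebesgue_measure.-integrable `[A, +oo[
         (fun y => (expR (- (C * y / 2 *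
            expR (- kappa (g (ln y) / g 0
                           * inv_on_nonneg (young_fenchel phi) (ln y)
                           - eps / g (ln y))))))%:E)
       /\
       lebesgue_measure.-integrable `[A, +oo[
         (fun y => (young_fenchel phi y * gen_inv p y *
            expR (young_fenchel phi y - C / 2 *
              expR (C0 y + eps * derive1 kappa
                      (y * g (young_fenchel phi y) / g 0
                       - eps / g (young_fenchel phi y))
                    / g (young_fenchel phi y))))%:E)) ->
  {ae P, forall w,
     lim_max_to (fun m j =>
       Num.max (- (max_array (fun k n => X k n w) m j
                   - g (ln (m * j)%:R)
                     * inv_on_nonneg (young_fenchel phi) (ln (m * j)%:R))) 0) 0}.
Proof.
move=> Hphi _ Hind _ gpos gmono _ _ kmono _ _ Cpos Htail _ [A [eps0 [A0 [e00 Hint]]]].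
pose ek (k : nat) := eps0 / k.+1%:R.
have ek0 : forall k, 0 < ek k by move=> k; rewrite /ek divr_gt0 // ltr0n.
have ekle : forall k, ek k <= eps0.
  move=> k; rewrite /ek ler_pdivrMr ?ltr0n //.
  by apply: ler_peMr; [exact: ltW | rewrite ler1n].
have Hk : forall k, exists Bad : set Omega, measurable Bad /\ P Bad = 0 /\
    forall w, ~ Bad w -> exists M : nat, forall m j, (0 < m)%N -> (0 < j)%N ->
      (M <= maxn m j)%N -> ~ DD phi X g (ek k) m j w.
  move=> k; exact: (bad_eps Hphi Hind gpos gmono kmono Cpos Htail (ek0 k) (Hint _ (ek0 k) (ekle k)).1).
pose Bk k := sval (cid (Hk k)).
have HB : forall k, [/\ measurable (Bk k), P (Bk k) = 0 &
    forall w, ~ Bk k w -> exists M : nat, forall m j, (0 < m)%N -> (0 < j)%N ->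
      (M <= maxn m j)%N -> ~ DD phi X g (ek k) m j w].
  by move=> k; rewrite /Bk; case: cid => /= B [mB [PB HB]].
apply: (@negligibleS _ _ _ P (\bigcup_k Bk k)).
  move=> w /= nQ; apply: contrapT => nU; apply: nQ => e e0.
  pose k := Num.truncn (eps0 / e).
  have eke : ek k < e.
    have : eps0 / e < k.+1%:R.
      by have /andP[_ h] := truncn_itv (ltW (divr_gt0 e00 e0)).
    rewrite /ek ltr_pdivrMr // => h; rewrite ltr_pdivrMr ?ltr0n //; lra.
  have nBk : ~ Bk k w by move=> h; apply: nU; exists k.
  have [_ _ HBk] := HB k.
  have [M HM] := HBk w nBk.
  exists M => m j m0 j0 Mmx.
  have nD := HM m j m0 j0 Mmx.
  case: (pselect (exists i, i \in rect m j /\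
      aa phi g (m * j) - ek k <= X i.1 i.2 w)) => [[i [ir hi]]|no]; last first.
    exfalso; apply: nD => i ir /=; rewrite in_itv /= ltNge; apply/negP => h.
    by apply: no; exists i.
  have [k0 km n0 nj] := mem_rect ir.
  have hmax : X i.1 i.2 w <= max_array (fun k n => X k n w) m j.
    rewrite /max_array.
    apply: le_trans (bigmax_ge_seq _ _ (i := i.1) _); last first.
      by rewrite mem_index_iota k0 ltnS.
    apply: bigmax_ge_seq.
    by rewrite mem_index_iota n0 ltnS.
  rewrite subr0 ger0_norm; last by rewrite le_max lexx orbT.
  rewrite gt_max e0 andbT.
  move: hi; rewrite /aa; lra.
apply: negligible_bigcup => k; exists (Bk k).
by case: (HB k) => mB PB _; split.
Qed.
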